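(* Let $\varkappa>0$ and $\beta\le 0$ be constants, let $g:\mathbb{R}\to\mathbb{R}$ be a sufficiently smooth function, and let $V_p(\xi_2)=-\left(\xi_2^2-\tfrac14\right)$. For $x_1\in\mathbb{R}$, $\xi_2\in\left[-\tfrac12,\tfrac12\right]$ and a function $f$ write $\langle f\rangle(x_1)=\int_{-1/2}^{1/2} f(x_1,\xi_2)\,d\xi_2$. Consider sequences of sufficiently smooth functions $\overline{c}_j(x_1)$ and $\widetilde{c}_j(x_1,\xi_2)$, $j=0,1,2,\dots$, with $c_j=\overline{c}_j+\widetilde{c}_j$, constructed as follows: $\widetilde{c}_0=\widetilde{c}_1=0$; for every $j\ge 0$, $\overline{c}_j$ solves $$-\varkappa\frac{\partial^2\overline{c}_j}{\partial x_1^2}+\langle V_p\rangle\frac{\partial\overline{c}_j}{\partial x_1}+\Big\langle V_p\frac{\partial\widetilde{c}_j}{\partial x_1}\Big\rangle+g(x_1)\,\delta_{j0}=2\beta\,\overline{c}_j+\beta\Big(\widetilde{c}_j\big(x_1,\tfrac12\big)+\widetilde{c}_j\big(x_1,-\tfrac12\big)\Big);$$ and for every $j\ge 2$, for each $x_1$, $\widetilde{c}_j(x_1,\cdot)$ is the solution of $$\varkappa\frac{\partial^2\widetilde{c}_j}{\partial\xi_2^2}=-\varkappa\frac{\partial^2 c_{j-2}}{\partial x_1^2}+V_p(\xi_2)\frac{\partial c_{j-2}}{\partial x_1}+g(x_1)\,\delta_{j2},\quad \xi_2\in\left(-\tfrac12,\tfrac12\right),$$ $$\pm\varkappa\frac{\partial\widetilde{c}_j}{\partial\xi_2}\Big|_{\xi_2=\pm\frac12}=\beta\,c_{j-2}\big(x_1,\pm\tfrac12\big),\qquad\langle\widetilde{c}_j\rangle=0.$$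 Then for every $j\ge0$, $\widetilde{c}_j(x_1,\xi_2)$ is, for each fixed $x_1$, a polynomial in $\xi_2$ of degree at most $2j$ (with coefficients depending on $x_1$).
   Context: This is the recursive construction of the terms of the asymptotic expansion $c^{(k)}_{\varepsilon r}(x_1,\xi_2)=\sum_{j=0}^k\varepsilon^j c_j(x_1,\xi_2)$, $\xi_2=x_2/\varepsilon$, for the convection–diffusion equation $-\operatorname{div}(\varkappa\nabla c)+V_p(x_2/\varepsilon)\,\partial c/\partial x_1=g(x_1)$ in the thin channel $\mathbb{R}\times(-\varepsilon/2,\varepsilon/2)$ with Robin condition $\varkappa\,\partial c/\partial n=\varepsilon\beta c$ on $x_2=\pm\varepsilon/2$. Here $\delta_{jm}$ is the Kronecker delta. The equation for $\overline{c}_j$ is the solvability (compatibility) condition ensuring the Neumann problem for $\widetilde{c}_{j+2}$ has a solution. *)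

(* Defs.v *)
From Stdlib Require Import Reals.
From Coquelicot Require Import Coquelicot.
Open Scope R_scope.

Definition pdx (f : R -> R -> R) : R -> R -> R :=
  fun x y => Derive (fun t => f t y) x.
Definition pdy (f : R -> R -> R) : R -> R -> R :=
  fun x y => Derive (fun t => f x t) y.

Definition mixed (k m : nat) (f : R -> R -> R) : R -> R -> R :=
  Nat.iter k pdx (Nat.iter m pdy f).

(* "Sufficiently smooth" in one variable: C^infinity. *)
Definition smooth1 (f : R -> R) : Prop :=
  forall (n : nat) (x : R), ex_derive_n f n x.

Definition smooth2 (f : R -> R -> R) : Prop :=
  forall (k m : nat) (x y : R),
    ex_derive (fun t => mixed k m f t y) x /\
    ex_derive (fun t => mixed k m f x t) y /\
    continuous (fun p : R * R => mixed k m f (fst p) (snd p)) (x, y).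

Definition Vp (xi : R) : R := - (xi ^ 2 - 1 / 4).

Definition avg (f : R -> R) : R := RInt f (-1/2) (1/2).

Definition kdelta (j m : nat) : R := if Nat.eqb j m then 1 else 0.

Definition cfull (cbar : nat -> R -> R) (ctil : nat -> R -> R -> R)
  (j : nat) : R -> R -> R := fun x y => cbar j x + ctil j x y.

(* Main.v *)
Require Import Defs.
From Stdlib Require Import Reals Lra Lia.
From Coquelicot Require Import Coquelicot.
Open Scope R_scope.

Definition PolyF (n : nat) (F : R -> R -> R) : Prop :=
  exists a : nat -> R -> R, (forall k, smooth1 (a k)) /\
    forall x xi, -1/2 <= xi <= 1/2 -> F x xi = sum_f_R0 (fun k => a k x * xi ^ k) n.

Lemma smooth1_const c : smooth1 (fun _ => c).
Proof. intros n x. apply ex_derive_n_const. Qed.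

Lemma smooth1_scal r f : smooth1 f -> smooth1 (fun x => r * f x).
Proof. intros H n x. apply ex_derive_n_scal_l, H. Qed.

Lemma smooth1_plus f g : smooth1 f -> smooth1 g -> smooth1 (fun x => f x + g x).
Proof.
  intros Hf Hg n x. apply ex_derive_n_plus; apply filter_forall; intros; auto.
Qed.

Lemma smooth1_Derive f : smooth1 f -> smooth1 (Derive f).
Proof.
  intros H n x. destruct n as [|n]. exact I.
  simpl. apply ex_derive_ext with (Derive_n f (S n)).
  - intros t. replace (S n) with (n + 1)%nat by lia.
    rewrite <- (Derive_n_comp f n 1). reflexivity.
  - apply (H (S (S n)) x).
Qed.

Lemma Derive_n_x (F : R -> R -> R) y n t :
  Derive_n (fun t => F t y) n t = Nat.iter n pdx F t y.
Proof.
  revert t; induction n; intros t. reflexivity.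
  simpl. unfold pdx at 1. apply Derive_ext. intros; apply IHn.
Qed.

Lemma smooth2_x F y : smooth2 F -> smooth1 (fun t => F t y).
Proof.
  intros H n x. destruct n. exact I.
  simpl. apply ex_derive_ext with (fun t => Nat.iter n pdx F t y).
  - intros t; symmetry; apply Derive_n_x.
  - apply (H n 0%nat x y).
Qed.

Lemma smooth2_pdy_x F y : smooth2 F -> smooth1 (fun t => pdy F t y).
Proof.
  intros H n x. destruct n. exact I.
  simpl. apply ex_derive_ext with (fun t => Nat.iter n pdx (pdy F) t y).
  - intros t; symmetry; apply (Derive_n_x (pdy F)).
  - apply (H n 1%nat x y).
Qed.

Lemma ex_derive_smooth1 f x : smooth1 f -> ex_derive f x.
Proof. intros H. apply (H 1%nat x). Qed.

Lemma sum_zero n : sum_f_R0 (fun _ => 0) n = 0.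
Proof. induction n; simpl; [lra| rewrite IHn; lra]. Qed.

Lemma poly_zero n : PolyF n (fun _ _ => 0).
Proof.
  exists (fun _ _ => 0). split. intros; apply smooth1_const.
  intros x xi _. rewrite <- (sum_zero n) at 1. apply sum_eq. intros; ring.
Qed.

Lemma poly_const n c : smooth1 c -> PolyF n (fun x _ => c x).
Proof.
  intros Hc. exists (fun k => if Nat.eqb k 0 then c else fun _ => 0). split.
  - intros k. destruct (Nat.eqb k 0). exact Hc. apply smooth1_const.
  - intros x xi _. induction n. simpl; ring.
    rewrite tech5, <- IHn. simpl. ring.
Qed.

Lemma poly_plus n F G : PolyF n F -> PolyF n G -> PolyF n (fun x y => F x y + G x y).
Proof.
  intros [a [Ha Fa]] [b [Hb Gb]].
  exists (fun k x => a k x + b k x). split.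
  - intros k. apply smooth1_plus; auto.
  - intros x xi Hxi. rewrite Fa, Gb by auto. rewrite <- plus_sum.
    apply sum_eq. intros; ring.
Qed.

Lemma poly_scal n r F : PolyF n F -> PolyF n (fun x y => r * F x y).
Proof.
  intros [a [Ha Fa]]. exists (fun k x => r * a k x). split.
  - intros k. apply smooth1_scal; auto.
  - intros x xi Hxi. rewrite Fa by auto. rewrite scal_sum.
    apply sum_eq. intros; ring.
Qed.

Lemma poly_mono n F : PolyF n F -> PolyF (S n) F.
Proof.
  intros [a [Ha Fa]].
  exists (fun k => if Nat.leb k n then a k else fun _ => 0). split.
  - intros k. destruct (Nat.leb k n). auto. apply smooth1_const.
  - intros x xi Hxi. rewrite Fa by auto. rewrite tech5.
    replace (Nat.leb (S n) n) with false by (symmetry; apply Nat.leb_gt; lia).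
    rewrite Rmult_0_l, Rplus_0_r. apply sum_eq. intros i Hi.
    replace (Nat.leb i n) with true by (symmetry; apply Nat.leb_le; lia). reflexivity.
Qed.

Lemma poly_mono_le n m F : (n <= m)%nat -> PolyF n F -> PolyF m F.
Proof. induction 1; auto using poly_mono. Qed.

Lemma poly_shift n F : PolyF n F -> PolyF (S n) (fun x y => y * F x y).
Proof.
  intros [a [Ha Fa]].
  exists (fun k => match k with O => fun _ => 0 | S k' => a k' end). split.
  - intros [|k]. apply smooth1_const. auto.
  - intros x xi Hxi. rewrite Fa by auto. clear Fa. induction n.
    + simpl. ring.
    + symmetry. match goal with |- sum_f_R0 ?g _ = _ =>
        transitivity (sum_f_R0 g (S n) + g (S (S n))); [reflexivity|] end.
      rewrite <- IHn. simpl. ring.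
Qed.

Lemma poly_Vp n F : PolyF n F -> PolyF (S (S n)) (fun x y => Vp y * F x y).
Proof.
  intros H.
  assert (H1 : PolyF (S (S n)) (fun x y => (1/4) * F x y + (-1) * (y * (y * F x y)))).
  { apply poly_plus. apply poly_mono_le with n; [lia|]. now apply poly_scal.
    apply poly_scal. apply poly_shift, poly_shift, H. }
  destruct H1 as [a [Ha Fa]]. exists a. split; auto.
  intros x xi Hxi. rewrite <- Fa by auto. unfold Vp. ring.
Qed.

Lemma is_derive_mulc f x l c : is_derive f x l -> is_derive (fun t => f t * c) x (l * c).
Proof.
  intros H. apply (is_derive_ext (fun t => c * f t)). intros; apply Rmult_comm.
  replace (l * c) with (c * l) by ring. now apply is_derive_scal.
Qed.

Lemma is_derive_sum n (a : nat -> R -> R) xi x :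
  (forall k, ex_derive (a k) x) ->
  is_derive (fun t => sum_f_R0 (fun k => a k t * xi ^ k) n) x
            (sum_f_R0 (fun k => Derive (a k) x * xi ^ k) n).
Proof.
  intros Ha. induction n.
  - simpl. apply is_derive_mulc. now apply Derive_correct.
  - simpl. apply (is_derive_plus (fun t => sum_f_R0 (fun k => a k t * xi ^ k) n)
      (fun t => a (S n) t * (xi * xi ^ n))). auto.
    apply is_derive_mulc. now apply Derive_correct.
Qed.

Lemma poly_pdx n F : PolyF n F -> PolyF n (pdx F).
Proof.
  intros [a [Ha Fa]]. exists (fun k => Derive (a k)). split.
  - intros k. now apply smooth1_Derive.
  - intros x xi Hxi. unfold pdx.
    rewrite (Derive_ext _ (fun t => sum_f_R0 (fun k => a k t * xi ^ k) n)) by auto.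
    apply is_derive_unique, is_derive_sum. intros; now apply ex_derive_smooth1.
Qed.

Lemma const_on g dg : (forall t, is_derive g t (dg t)) ->
  (forall t, -1/2 < t < 1/2 -> dg t = 0) ->
  forall xi, -1/2 <= xi <= 1/2 -> g xi = g 0.
Proof.
  intros Hd H0 xi Hxi.
  assert (Hl : forall c, derivable_pt_lim g c (dg c)) by (intros; now apply is_derive_Reals).
  destruct (Rtotal_order xi 0) as [Hlt|[Heq|Hgt]].
  - destruct (MVT_cor2 g dg xi 0 Hlt) as [c [Hc Hc']]. intros; apply Hl.
    rewrite H0 in Hc by lra. lra.
  - now subst.
  - destruct (MVT_cor2 g dg 0 xi Hgt) as [c [Hc Hc']]. intros; apply Hl.
    rewrite H0 in Hc by lra. lra.
Qed.

Lemma is_derive_psum n p (u : nat -> R) t :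
  is_derive (fun t => sum_f_R0 (fun k => u k * t ^ (S (k + p))) n) t
            (sum_f_R0 (fun k => u k * INR (S (k + p)) * t ^ (k + p)) n).
Proof.
  assert (Hm : forall m, is_derive (fun t => t ^ S m) t (INR (S m) * t ^ m)).
  { intros m. replace (INR (S m) * t ^ m) with (INR (S m) * 1 * t ^ Nat.pred (S m)) by (simpl; ring).
    apply is_derive_pow. apply (is_derive_id t). }
  induction n.
  - cbn [sum_f_R0]. apply (is_derive_ext (fun t => u 0%nat * t ^ S p)). intros; reflexivity.
    replace (u 0%nat * INR (S (0 + p)) * t ^ (0 + p)) with (u 0%nat * (INR (S p) * t ^ p)) by (rewrite Nat.add_0_l; ring).
    apply is_derive_scal, Hm.
  - cbn [sum_f_R0]. apply (is_derive_plus (fun t => sum_f_R0 (fun k => u k * t ^ S (k + p)) n)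
      (fun t => u (S n) * t ^ S (S n + p))). auto.
    replace (u (S n) * INR (S (S n + p)) * t ^ (S n + p))
      with (u (S n) * (INR (S (S n + p)) * t ^ (S n + p))) by ring.
    apply is_derive_scal, Hm.
Qed.

Lemma psum_at0 n p (u : nat -> R) : sum_f_R0 (fun k => u k * 0 ^ (S (k + p))) n = 0.
Proof.
  transitivity (sum_f_R0 (fun _ => 0) n). apply sum_eq. intros. cbn [pow]. ring.
  apply sum_zero.
Qed.

Lemma poly_integrate n H Q : smooth2 H -> PolyF n Q ->
  (forall x xi, -1/2 < xi < 1/2 -> pdy (pdy H) x xi = Q x xi) ->
  PolyF (S (S n)) H.
Proof.
  intros HH [q [Hq Qq]] HE.
  exists (fun k => match k with
                   | O => fun x => H x 0
                   | S O => fun x => pdy H x 0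
                   | S (S k) => fun x => / (INR (S k) * INR (S (S k))) * q k x end).
  split.
  { intros [|[|k]]. apply smooth2_x, HH. apply smooth2_pdy_x, HH.
    apply smooth1_scal, Hq. }
  intros x xi Hxi.
  set (c := fun k => / (INR (S k) * INR (S (S k))) * q k x).
  set (P := fun t => sum_f_R0 (fun k => c k * t ^ (S (k + 1))) n).
  set (P1 := fun t => sum_f_R0 (fun k => (c k * INR (S (k + 1))) * t ^ (S (k + 0))) n).
  set (P2 := fun t => sum_f_R0 (fun k => q k x * t ^ k) n).
  assert (DP : forall t, is_derive P t (P1 t)).
  { intros t. unfold P, P1.
    replace (sum_f_R0 (fun k => c k * INR (S (k + 1)) * t ^ S (k + 0)) n)
      with (sum_f_R0 (fun k => c k * INR (S (k + 1)) * t ^ (k + 1)) n).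
    apply is_derive_psum.
    apply sum_eq; intros. rewrite Nat.add_0_r, Nat.add_1_r. reflexivity. }
  assert (DP1 : forall t, is_derive P1 t (P2 t)).
  { intros t. unfold P1, P2.
    replace (sum_f_R0 (fun k => q k x * t ^ k) n)
      with (sum_f_R0 (fun k => c k * INR (S (k + 1)) * INR (S (k + 0)) * t ^ (k + 0)) n).
    apply (is_derive_psum n 0 (fun k => c k * INR (S (k + 1)))).
    apply sum_eq; intros. rewrite Nat.add_0_r, Nat.add_1_r. unfold c.
    field. split; apply not_0_INR; lia. }
  assert (DH : forall t, is_derive (fun t => H x t) t (pdy H x t)).
  { intros t. apply Derive_correct. apply (proj2 (HH 0%nat 0%nat x t)). }
  assert (DH1 : forall t, is_derive (fun t => pdy H x t) t (pdy (pdy H) x t)).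
  { intros t. apply Derive_correct. apply (proj2 (HH 0%nat 1%nat x t)). }
  assert (P10 : P1 0 = 0) by apply psum_at0.
  assert (P0 : P 0 = 0) by apply psum_at0.
  assert (E1 : forall t, -1/2 <= t <= 1/2 -> pdy H x t - P1 t = pdy H x 0 - P1 0).
  { apply (const_on (fun t => pdy H x t - P1 t) (fun t => pdy (pdy H) x t - P2 t)).
    - intros t. apply (is_derive_minus (fun t => pdy H x t) P1); auto.
    - intros t Ht. rewrite HE by auto. rewrite Qq by lra. unfold P2. lra. }
  assert (E2 : forall t, -1/2 <= t <= 1/2 ->
     H x t - P t - pdy H x 0 * t = H x 0 - P 0 - pdy H x 0 * 0).
  { apply (const_on (fun t => H x t - P t - pdy H x 0 * t)
                    (fun t => pdy H x t - P1 t - pdy H x 0 * 1)).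
    - intros t. apply (is_derive_minus (fun t => H x t - P t) (fun t => pdy H x 0 * t)).
      apply (is_derive_minus (fun t => H x t) P); auto.
      apply is_derive_scal, (is_derive_id t).
    - intros t Ht. rewrite E1 by lra. rewrite P10. lra. }
  specialize (E2 xi Hxi). rewrite P0 in E2.
  assert (HHx : H x xi = H x 0 + pdy H x 0 * xi + P xi) by lra.
  rewrite HHx. rewrite decomp_sum by lia. simpl pred. rewrite decomp_sum by lia.
  simpl pred. unfold P. cbn beta iota.
  replace (sum_f_R0 (fun i => / (INR (S i) * INR (S (S i))) * q i x * xi ^ S (S i)) n)
    with (sum_f_R0 (fun k => c k * xi ^ S (k + 1)) n).
  simpl pow. ring.
  apply sum_eq; intros. unfold c. rewrite Nat.add_1_r. reflexivity.
Qed.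

Lemma PolyF_ext n F G : (forall x xi, F x xi = G x xi) -> PolyF n F -> PolyF n G.
Proof.
  intros E [a [Ha Fa]]. exists a. split; auto. intros; rewrite <- E; auto.
Qed.

Theorem lemma1 (kappa beta : R) (g : R -> R)
  (cbar : nat -> R -> R) (ctil : nat -> R -> R -> R) :
  0 < kappa -> beta <= 0 ->
  smooth1 g ->
  (forall j, smooth1 (cbar j)) ->
  (forall j, smooth2 (ctil j)) ->
  (forall x1 xi, ctil 0%nat x1 xi = 0) ->
  (forall x1 xi, ctil 1%nat x1 xi = 0) ->
  (* equation for cbar_j, every j >= 0 *)
  (forall (j : nat) (x1 : R),
     - kappa * Derive_n (cbar j) 2 x1 + avg Vp * Derive (cbar j) x1
     + avg (fun xi => Vp xi * pdx (ctil j) x1 xi) + g x1 * kdelta j 0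
     = 2 * beta * cbar j x1 + beta * (ctil j x1 (1/2) + ctil j x1 (-1/2))) ->
  (* Neumann problem for ctil_j, every j >= 2 *)
  (forall (j : nat) (x1 xi : R), (2 <= j)%nat -> -1/2 < xi < 1/2 ->
     kappa * pdy (pdy (ctil j)) x1 xi
     = - kappa * pdx (pdx (cfull cbar ctil (j - 2))) x1 xi
       + Vp xi * pdx (cfull cbar ctil (j - 2)) x1 xi + g x1 * kdelta j 2) ->
  (forall (j : nat) (x1 : R), (2 <= j)%nat ->
     kappa * pdy (ctil j) x1 (1/2) = beta * cfull cbar ctil (j - 2) x1 (1/2) /\
     - kappa * pdy (ctil j) x1 (-1/2) = beta * cfull cbar ctil (j - 2) x1 (-1/2)) ->
  (forall (j : nat) (x1 : R), (2 <= j)%nat -> avg (fun xi => ctil j x1 xi) = 0) ->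
  forall (j : nat) (x1 : R), exists a : nat -> R,
    forall xi, -1/2 <= xi <= 1/2 ->
      ctil j x1 xi = sum_f_R0 (fun k => a k * xi ^ k) (2 * j).
Proof.
  intros Hk Hb Hg Hcb Hct H0 H1 _ HN _ _.
  assert (Main : forall j, PolyF (2 * j) (ctil j) /\ PolyF (2 * S j) (ctil (S j))).
  { induction j as [|j [IH1 IH2]].
    - split; apply PolyF_ext with (fun _ _ => 0); auto using poly_zero.
    - split; auto.
      replace (2 * S (S j))%nat with (S (S (S (S (2 * j))))) by lia.
      apply poly_integrate with
        (fun x xi => / kappa * (- kappa * pdx (pdx (cfull cbar ctil j)) x xi
          + Vp xi * pdx (cfull cbar ctil j) x xi + g x * kdelta (S (S j)) 2)).
      + apply Hct.
      + assert (Hc : PolyF (2 * j) (cfull cbar ctil j)).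
        { apply (poly_plus _ (fun x _ => cbar j x)). apply poly_const, Hcb. exact IH1. }
        apply poly_scal. apply poly_plus. apply poly_plus.
        * apply poly_mono_le with (2 * j)%nat. lia.
          apply poly_scal, poly_pdx, poly_pdx, Hc.
        * apply poly_Vp, poly_pdx, Hc.
        * apply (poly_const _ (fun x => g x * kdelta (S (S j)) 2)).
          intros m x. apply ex_derive_n_ext with (fun x => kdelta (S (S j)) 2 * g x).
          intros; apply Rmult_comm. apply ex_derive_n_scal_l, Hg.
      + intros x xi Hxi. assert (HN' := HN (S (S j)) x xi ltac:(lia) Hxi).
        replace (S (S j) - 2)%nat with j in HN' by lia. rewrite <- HN'. field. lra. }
  intros j x1. destruct (proj1 (Main j)) as [a [_ Fa]].
  exists (fun k => a k x1). intros xi Hxi. now apply Fa.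
Qed.
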